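(* Let $M$ be a complete pointed metric space and $Y$ a strictly convex real Banach space with the Kadec–Klee property. Then for every $f\in\mathrm{Lip}_0(M,Y)$: $f\in\mathrm{A}(M,Y)$ if and only if $T_f\in\mathrm{QNA}(\mathcal{F}(M),Y)$.
   Context: Throughout, metric spaces are complete and pointed, with base point $0$. $\mathrm{Lip}_0(M,Y)$ is the Banach space of Lipschitz maps $f:M\to Y$ with $f(0)=0$, normed by $\|f\|=\sup_{p\neq q}\|f(p)-f(q)\|/d(p,q)$. A map $f$ attains its norm toward $y\in Y$ if there is a sequence $(p_n,q_n)$ in $M\times M$ with $p_n\neq q_n$ such that $[f(p_n)-f(q_n)]/d(p_n,q_n)\to y$ and $\|y\|=\|f\|$; $\mathrm{A}(M,Y)$ is the set of $f$ attaining their norm toward some vector. $\mathcal{F}(M)$ is the closed linear span of the evaluations $\delta(x)$ in $\mathrm{Lip}_0(M,\mathbb{R})^*$, and $T_f\in\mathcal{L}(\mathcal{F}(M),Y)$ is the unique operator with $T_f(\delta(x))=f(x)$. For Banach spaces $X,Y$, $T\in\mathcal{L}(X,Y)$ belongs to $\mathrm{QNA}(X,Y)$ if there exist $(x_n)\subset B_X$ and $y_0\in Y$ with $Tx_n\to y_0$ and $\|y_0\|=\|T\|$. The Kadec–Klee property here means that the weak topology and the norm topology coincide on the unit sphere $S_Y$. *)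

(* Defs.v *)
From HB Require Import structures.
From mathcomp Require Import all_boot all_order all_algebra.
From mathcomp Require Import all_classical all_reals all_analysis.
Set Implicit Arguments. Unset Strict Implicit. Unset Printing Implicit Defensive.
Import Order.TTheory GRing.Theory Num.Theory.
Import numFieldNormedType.Exports.
Local Open Scope classical_set_scope.
Local Open Scope ring_scope.

Section Defs.
Variable R : realType.

Definition is_metric (M : Type) (d : M -> M -> R) : Prop :=
  (forall x y, 0 <= d x y) /\
  (forall x y, d x y = 0 <-> x = y) /\
  (forall x y, d x y = d y x) /\
  (forall x y z, d x z <= d x y + d y z).

Definition complete_metric (M : Type) (d : M -> M -> R) : Prop :=
  forall u : nat -> M,
    (forall e : R, 0 < e -> exists N : nat, forall m n : nat,
        (N <= m)%N -> (N <= n)%N -> d (u m) (u n) < e) ->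
    exists x : M, forall e : R, 0 < e -> exists N : nat, forall n : nat,
        (N <= n)%N -> d (u n) x < e.

Definition Lip0 (M : Type) (d : M -> M -> R) (x0 : M)
    (Y : normedModType R) (f : M -> Y) : Prop :=
  f x0 = 0 /\ exists C : R, forall p q, `|f p - f q| <= C * d p q.

Definition lipnorm (M : Type) (d : M -> M -> R) (Y : normedModType R)
    (f : M -> Y) : R :=
  sup [set r : R | exists p q : M, p <> q /\ r = `|f p - f q| / d p q].

Definition attains_norm_toward (M : Type) (d : M -> M -> R)
    (Y : normedModType R) (f : M -> Y) (y : Y) : Prop :=
  exists p q : nat -> M, (forall n, p n <> q n) /\
    ((fun n => (d (p n) (q n))^-1 *: (f (p n) - f (q n))) @ \oo --> y) /\
    `|y| = lipnorm d f.

Definition in_A (M : Type) (d : M -> M -> R) (Y : normedModType R)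
    (f : M -> Y) : Prop :=
  exists y : Y, attains_norm_toward d f y.

Definition lip_ball (M : Type) (d : M -> M -> R) (x0 : M) (g : M -> R) : Prop :=
  g x0 = 0 /\ forall p q, `|g p - g q| <= d p q.

Definition Lip0R (M : Type) (d : M -> M -> R) (x0 : M) (g : M -> R) : Prop :=
  g x0 = 0 /\ exists C : R, forall p q, `|g p - g q| <= C * d p q.

(* finite linear combination  sum_i a_i delta(x_i)  acting on Lip0(M,R) *)
Definition mol (M : Type) (s : seq (R * M)) (g : M -> R) : R :=
  \sum_(c <- s) c.1 * g c.2.

(* its image  sum_i a_i f(x_i)  under T_f *)
Definition molY (M : Type) (Y : normedModType R) (f : M -> Y)
    (s : seq (R * M)) : Y :=
  \sum_(c <- s) c.1 *: f c.2.

(* phi is an element of Lip0(M,R)^* (linear on Lip0(M,R); boundedness follows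
   from the approximation below) lying in the norm closure of span delta(M),
   i.e. phi \in F(M). *)
Definition in_free (M : Type) (d : M -> M -> R) (x0 : M)
    (phi : (M -> R) -> R) : Prop :=
  (forall (a : R) (g h : M -> R), Lip0R d x0 g -> Lip0R d x0 h ->
      phi (fun x => a * g x + h x) = a * phi g + phi h) /\
  (forall e : R, 0 < e -> exists s : seq (R * M),
      forall g, lip_ball d x0 g -> `|phi g - mol s g| <= e).

Definition free_ball (M : Type) (d : M -> M -> R) (x0 : M)
    (phi : (M -> R) -> R) : Prop :=
  forall g, lip_ball d x0 g -> `|phi g| <= 1.

(* T_f phi = y : T_f is the continuous extension of delta(x) |-> f(x);
   y is the limit of T_f(mu_n) for finitely supported mu_n -> phi in norm. *)
Definition Tf_val (M : Type) (d : M -> M -> R) (x0 : M)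
    (Y : normedModType R) (f : M -> Y) (phi : (M -> R) -> R) (y : Y) : Prop :=
  exists s : nat -> seq (R * M),
    (forall n : nat, forall g, lip_ball d x0 g ->
        `|phi g - mol (s n) g| <= n.+1%:R^-1) /\
    ((fun n => molY f (s n)) @ \oo --> y).

Definition Tf_norm (M : Type) (d : M -> M -> R) (x0 : M)
    (Y : normedModType R) (f : M -> Y) : R :=
  sup [set r : R | exists (phi : (M -> R) -> R) (y : Y),
        in_free d x0 phi /\ free_ball d x0 phi /\ Tf_val d x0 f phi y /\
        r = `|y|].

Definition Tf_QNA (M : Type) (d : M -> M -> R) (x0 : M)
    (Y : normedModType R) (f : M -> Y) : Prop :=
  exists (phi : nat -> (M -> R) -> R) (yn : nat -> Y) (y0 : Y),
    (forall n, in_free d x0 (phi n) /\ free_ball d x0 (phi n) /\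
               Tf_val d x0 f (phi n) (yn n)) /\
    (yn @ \oo --> y0) /\
    `|y0| = Tf_norm d x0 f.

Definition strictly_convex (Y : normedModType R) : Prop :=
  forall x y : Y, `|x| = 1 -> `|y| = 1 -> x <> y -> `|2^-1 *: (x + y)| < 1.

Definition is_dual_elt (Y : normedModType R) (l : Y -> R) : Prop :=
  (forall (a : R) (x y : Y), l (a *: x + y) = a * l x + l y) /\ continuous l.

(* weak and norm topologies coincide on S_Y: at each point of S_Y, every
   relative norm-neighbourhood contains a relative weak-neighbourhood and
   conversely (basic neighbourhoods written out). *)
Definition kadec_klee (Y : normedModType R) : Prop :=
  forall y : Y, `|y| = 1 ->
   (forall e : R, 0 < e -> exists (k : nat) (l : nat -> Y -> R) (del : R),
      (forall i, is_dual_elt (l i)) /\ 0 < del /\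
      forall z : Y, `|z| = 1 ->
        (forall i, (i < k)%N -> `|l i z - l i y| < del) -> `|z - y| < e) /\
   (forall (k : nat) (l : nat -> Y -> R) (del : R),
      (forall i, is_dual_elt (l i)) -> 0 < del ->
      exists e : R, 0 < e /\ forall z : Y, `|z| = 1 -> `|z - y| < e ->
        forall i, (i < k)%N -> `|l i z - l i y| < del).

End Defs.

(* Main.v *)
Require Import Defs.
From HB Require Import structures.
From mathcomp Require Import all_boot all_order all_algebra.
From mathcomp Require Import all_classical all_reals all_analysis.
From mathcomp Require Import ring lra.
Set Implicit Arguments. Unset Strict Implicit. Unset Printing Implicit Defensive.
Import Order.TTheory GRing.Theory Num.Theory.
Import numFieldNormedType.Exports.
Local Open Scope classical_set_scope.
Local Open Scope ring_scope.
Section HB.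
Variables (R : realType) (V : lmodType R) (p : V -> R).
Hypothesis psub : forall x y, p (x + y) <= p x + p y.
Hypothesis phom : forall (t : R) x, 0 < t -> p (t *: x) = t * p x.

Lemma p0 : p 0 = 0.
Proof.
have := phom 0 (ltr0n R 2); rewrite scaler0 => h.
lra.
Qed.

Lemma pneg x : - p x <= p (- x).
Proof. have := psub x (- x); rewrite subrr p0; lra. Qed.

Variable z0 : V.

Definition good (G : set (V * R)) :=
  [/\ (forall v a b, G (v, a) -> G (v, b) -> a = b),
      (forall (t : R) u a v b, G (u, a) -> G (v, b) -> G (t *: u + v, t * a + b)),
      (forall v a, G (v, a) -> a <= p v) &
      G (z0, p z0)].

Definition PG (G : set (V * R)) := G = set0 \/ good G.

Lemma good0 G : good G -> G (0, 0).
Proof.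
case=> _ cl _ Gz.
have := cl (-1) _ _ _ _ Gz Gz.
by rewrite scaleN1r addNr mulN1r addNr.
Qed.

Lemma goodscale G t u a : good G -> G (u, a) -> G (t *: u, t * a).
Proof.
move=> gG Gu; have := (let: And4 _ cl _ _ := gG in cl) t _ _ _ _ Gu (good0 gG).
by rewrite addr0 addr0.
Qed.

Lemma PG_nonempty G x : PG G -> G x -> good G.
Proof. by case=> // -> . Qed.

Lemma chain_PG (F : set (set (V * R))) :
  F `<=` PG -> total_on F subset -> PG (\bigcup_(X in F) X).
Proof.
move=> FP tot.
have [[G0 [x [FG0 G0x]]]|none] := pselect (exists G, exists x, F G /\ G x); last first.
  left; apply/seteqP; split => // x [G FG Gx]; apply: none; by exists G, x.
right.
have big2 : forall x y, (\bigcup_(X in F) X) x -> (\bigcup_(X in F) X) y ->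
    exists G, [/\ F G, good G, G x & G y].
  move=> x1 y1 [G1 FG1 G1x] [G2 FG2 G2y].
  case: (tot _ _ FG1 FG2) => sub.
  - exists G2; split => //; last by apply: sub.
    by apply: (PG_nonempty (FP _ FG2) G2y).
  - exists G1; split => //; last by apply: sub.
    by apply: (PG_nonempty (FP _ FG1) G1x).
have gG0 := PG_nonempty (FP _ FG0) G0x.
split.
- move=> v a b /big2 h /h [G [_ [fn _ _ _] Ga Gb]]; exact: fn Ga Gb.
- move=> t u a v b /big2 h /h [G [FG [_ cl _ _] Ga Gb]].
  by exists G => //; apply: cl.
- move=> v a [G FG Ga]; have [_ _ dom _] := PG_nonempty (FP _ FG) Ga; exact: dom.
- by exists G0 => //; case: gG0.
Qed.

Definition base : set (V * R) := fun x => exists t : R, x = (t *: z0, t * p z0).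

Lemma base_good : good base.
Proof.
split.
- move=> v a b [t [-> ->]] [s [e ->]].
  have : (t - s) *: z0 = 0 by rewrite scalerBl e subrr.
  move/eqP; rewrite scaler_eq0 => /orP[/eqP ts|/eqP ->].
    by have -> : t = s by lra.
  by rewrite p0 !mulr0.
- move=> t u a v b [t1 [-> ->]] [t2 [-> ->]]; exists (t * t1 + t2).
  by rewrite scalerDl scalerA mulrDl mulrA.
- move=> v a [t [-> ->]].
  have [tgt0|tle0] := ltrP 0 t; first by rewrite phom.
  have [->|tlt0] := eqVneq t 0; first by rewrite scale0r p0 mul0r.
  have tn : 0 < - t by rewrite oppr_gt0 lt_neqAle tlt0 tle0.
  have := phom (- z0) tn; rewrite scaleNr scalerN opprK => ->.
  have := pneg z0; nra.
- by exists 1; rewrite scale1r mul1r.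
Qed.

Section Ext.
Variable A : set (V * R).
Hypothesis gA : good A.
Variable w : V.
Hypothesis wout : forall a, ~ A (w, a).

Let L := [set r | exists u a, A (u, a) /\ r = a - p (u - w)].

Let Lub v b : A (v, b) -> ubound L (p (v + w) - b).
Proof.
move=> Av _ [u [a [Au ->]]].
have [_ cl dom _] := gA.
have := dom _ _ (cl 1 _ _ _ _ Au Av); rewrite scale1r mul1r => h.
have := psub (u - w) (v + w).
have -> : u - w + (v + w) = u + v by rewrite addrACA addNr addr0.
lra.
Qed.

Let c := sup L.

Let Lne : L !=set0.
Proof. exists (0 - p (0 - w)); exists 0, 0; split => //; exact: good0. Qed.

Let Lhas : has_sup L.
Proof. split; first exact: Lne. exists (p (0 + w) - 0); apply: (Lub (good0 gA)). Qed.

Let c_ge u a : A (u, a) -> a - p (u - w) <= c.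
Proof. move=> Au; apply: sup_ubound; first by case: Lhas. by exists u, a. Qed.

Let c_le v b : A (v, b) -> c <= p (v + w) - b.
Proof. move=> Av; apply: ge_sup; first exact: Lne. exact: Lub. Qed.

Definition ext : set (V * R) :=
  fun x => exists u a t, A (u, a) /\ x = (u + t *: w, a + t * c).

Lemma ext_good : good ext.
Proof.
have [fn cl dom Az] := gA.
split.
- move=> v a b [u1 [a1 [t1 [Au1 [-> ->]]]]] [u2 [a2 [t2 [Au2 []]]]].
  have [->|tne] := eqVneq t1 t2.
    move=> /addIr e ->; rewrite e in Au1; by rewrite (fn _ _ _ Au1 Au2).
  move=> e; exfalso.
  have e2 : (t1 - t2) *: w = u2 - u1.
    rewrite scalerBl (_ : t1 *: w = u2 + t2 *: w - u1); last by rewrite -e addrAC subrr add0r.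
    by rewrite addrAC addrK.
  have tne' : t1 - t2 != 0 by rewrite subr_eq0.
  suff : A (w, (t1 - t2)^-1 * (a2 - a1)) by move/wout.
  have := goodscale (t1 - t2)^-1 gA (cl (-1) _ _ _ _ Au1 Au2).
  by rewrite scaleN1r mulN1r (addrC (- u1)) (addrC (- a1)) -e2 scalerA mulVf // scale1r.
- move=> t v1 a1 v2 a2 [u1 [b1 [t1 [Au1 [-> ->]]]]] [u2 [b2 [t2 [Au2 [-> ->]]]]].
  exists (t *: u1 + u2), (t * b1 + b2), (t * t1 + t2); split; first exact: cl.
  congr pair.
    by rewrite scalerDr scalerDl scalerA !addrA; congr (_ + _); rewrite -!addrA; congr (_ + _); rewrite addrC.
  by rewrite mulrDr mulrDl mulrA; ring.
- move=> v a [u [b [t [Au [-> ->]]]]].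
  have [tgt0|tle0] := ltrP 0 t.
    have Aut := goodscale t^-1 gA Au.
    have h := c_le Aut.
    have := phom (t^-1 *: u + w) tgt0.
    rewrite (_ : t *: (t^-1 *: u + w) = u + t *: w); last first.
      by rewrite scalerDr scalerA mulfV ?scale1r // gt_eqF.
    move=> ->.
    have : t * c <= t * (p (t^-1 *: u + w) - t^-1 * b) by rewrite ler_pM2l.
    rewrite mulrBr mulrA mulfV ?gt_eqF // mul1r; lra.
  have [->|tlt0] := eqVneq t 0.
    by rewrite scale0r addr0 mul0r addr0; apply: dom.
  have tn : 0 < - t by rewrite oppr_gt0 lt_neqAle tlt0 tle0.
  have Aut := goodscale (- t)^-1 gA Au.
  have h := c_ge Aut.
  have := phom ((- t)^-1 *: u - w) tn.
  rewrite (_ : - t *: ((- t)^-1 *: u - w) = u + t *: w); last first.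
    by rewrite scalerBr scalerA mulfV ?scale1r ?gt_eqF // scaleNr opprK.
  move=> ->.
  have : - t * ((- t)^-1 * b - p ((- t)^-1 *: u - w)) <= - t * c by rewrite ler_pM2l.
  rewrite mulrBr mulrA mulfV ?gt_eqF // mul1r; lra.
- by exists z0, (p z0), 0; rewrite scale0r mul0r !addr0.
Qed.

Lemma ext_sup : A `<=` ext.
Proof. move=> [u a] Au; exists u, a, 0; by rewrite scale0r mul0r !addr0. Qed.

Lemma ext_w : ext (w, c).
Proof. exists 0, 0, 1; rewrite add0r scale1r mul1r add0r; split => //; exact: good0. Qed.

End Ext.

Lemma HB_exists : exists psi : V -> R,
  [/\ (forall (a : R) x y, psi (a *: x + y) = a * psi x + psi y),
      (forall x, psi x <= p x) & psi z0 = p z0].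
Proof.
have [A [PA Amax]] := @Zorn_bigcup _ PG chain_PG.
have gA : good A.
  case: PA => // A0; exfalso; apply: (Amax base); last by right; exact: base_good.
  rewrite A0; split; first by [].
  move=> /(_ (z0, p z0)); apply; exists 1; by rewrite scale1r mul1r.
have tot : forall v, exists a, A (v, a).
  move=> v; apply: contrapT => nv.
  have wout : forall a, ~ A (v, a) by move=> a Ava; apply: nv; exists a.
  apply: (Amax (ext A v)); last by right; exact: ext_good.
  split; first exact: ext_sup.
  move=> /(_ _ (ext_w gA v)) Av; exact: (wout _ Av).
pose psi v := projT1 (cid (tot v)).
have psiP v : A (v, psi v) by rewrite /psi; case: cid.
have [fn cl dom Az] := gA.
exists psi; split.
- move=> a x y; apply: (fn _ _ _ (psiP _)); exact: cl.
- move=> x; exact: dom.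
- exact: fn (psiP _) Az.
Qed.

End HB.
Section Ultra.
Variable R : realType.
Variable U : set_system nat.
Hypothesis UU : UltraFilter U.
Hypothesis Uinf : forall N, U [set n | (N <= n)%N].

Lemma Uex A : U A -> exists n, A n.
Proof. exact: filter_ex. Qed.

Lemma UI A B : U A -> U B -> U (A `&` B).
Proof. exact: filterI. Qed.

Lemma US (A B : set nat) : (forall n, A n -> B n) -> U A -> U B.
Proof. move=> h; exact: filterS. Qed.

Lemma Ufin K (P : nat -> nat -> Prop) :
  U [set n | exists c, (c < K)%N /\ P c n] -> exists c, (c < K)%N /\ U [set n | P c n].
Proof.
elim: K => [|K IH] h.
  by have [n [c [] ]] := Uex h.
case: (in_ultra_setVsetC [set n | P K n] UU) => hK; first by exists K; split.
have [c [cK Uc]] : exists c, (c < K)%N /\ U [set n | P c n].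
  apply: IH; apply: US (UI h hK) => n [[c [cK Pc]] nP].
  exists c; split => //; move: cK; rewrite ltnS leq_eqVlt => /orP[/eqP e|//].
  by rewrite e in Pc.
by exists c; split => //; apply: ltnW.
Qed.

Lemma Ubig K (P : nat -> set nat) :
  (forall i, (i < K)%N -> U (P i)) -> U [set n | forall i, (i < K)%N -> P i n].
Proof.
elim: K => [|K IH] h.
  by apply: US filterT => n _ i.
apply: US (UI (IH (fun i iK => h i (ltnW iK))) (h K (ltnSn K))) => n [h1 h2] i.
by rewrite ltnS leq_eqVlt => /orP[/eqP ->|/h1].
Qed.

Lemma Ulim (x : nat -> R) (M : R) : (forall n, `|x n| <= M) ->
  exists l, forall eta, 0 < eta -> U [set n | `|x n - l| < eta].
Proof.
move=> xM.
pose E := [set t : R | U [set n | t <= x n]].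
have Ene : E (- M).
  by apply: US filterT => n _; have := xM n; rewrite ler_norml => /andP[] //.
have Eub : ubound E (M + 1).
  move=> t Et; rewrite leNgt; apply/negP => Mt.
  have [n /= hn] := Uex Et; have := xM n; rewrite ler_norml => /andP[_]; lra.
have Esup : has_sup E by split; [exists (- M) | exists (M + 1)].
exists (sup E) => eta eta0.
have [t Et lt] := sup_adherent eta0 Esup.
have notE : ~ E (sup E + eta / 2).
  move=> /(sup_ubound (proj2 Esup)); lra.
have Uc : U [set n | x n < sup E + eta / 2].
  case: (in_ultra_setVsetC [set n | sup E + eta / 2 <= x n] UU) => // h.
  by apply: US h => n /= /negP; rewrite -ltNge.
apply: US (UI Et Uc) => n /= [h1 h2]; rewrite ltr_norml; apply/andP; split; lra.
Qed.

Variable Y : completeNormedModType R.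

Lemma UlimY (P : nat -> Y) :
  (forall e, 0 < e -> exists A, U A /\ forall n m, A n -> A m -> `|P n - P m| < e) ->
  exists a, forall e, 0 < e -> U [set n | `|P n - a| < e].
Proof.
move=> hc.
have cG : cauchy (P @ U).
  apply/cauchy_ballP => e e0.
  have [A [UA hA]] := hc e e0.
  exists (P @` A, P @` A) => /=.
    by split; apply: US UA => n An; exists n.
  move=> [y1 y2] [/= [n An <-] [m Am <-]].
  rewrite -ball_normE /ball_ /=; exact: hA.
have cv : cvg (P @ U) by apply: cauchy_cvg.
exists (lim (P @ U)) => e e0.
move/cvgrPdist_lt: cv => /(_ e e0).
by apply: US => n /=; rewrite distrC.
Qed.

End Ultra.
Section Lin.
Variables (R : realType) (Y : normedModType R).

Definition blin (psi : Y -> R) :=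
  (forall (a : R) x y, psi (a *: x + y) = a * psi x + psi y) /\
  exists C, 0 <= C /\ forall z, `|psi z| <= C * `|z|.

Section blinP.
Variable psi : Y -> R.
Hypothesis hp : blin psi.

Lemma blin0 : psi 0 = 0.
Proof.
have := (proj1 hp) 1 0 0; rewrite scale1r addr0 mul1r => h; lra.
Qed.

Lemma blinD x y : psi (x + y) = psi x + psi y.
Proof. by have := (proj1 hp) 1 x y; rewrite scale1r mul1r. Qed.

Lemma blinZ a x : psi (a *: x) = a * psi x.
Proof. by have := (proj1 hp) a x 0; rewrite !addr0 blin0 addr0. Qed.

Lemma blinN x : psi (- x) = - psi x.
Proof. by rewrite -scaleN1r blinZ mulN1r. Qed.

Lemma blinB x y : psi (x - y) = psi x - psi y.
Proof. by rewrite blinD blinN. Qed.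

Lemma blin_sum (I : Type) (s : seq I) (G : I -> Y) :
  psi (\sum_(i <- s) G i) = \sum_(i <- s) psi (G i).
Proof.
elim: s => [|i s IH]; first by rewrite !big_nil blin0.
by rewrite !big_cons blinD IH.
Qed.

Lemma blin_lip : exists C, 0 <= C /\ forall x y, `|psi x - psi y| <= C * `|x - y|.
Proof.
have [C [C0 hC]] := proj2 hp; exists C; split => // x y.
by rewrite -blinB.
Qed.

End blinP.

Lemma dual_blin l : is_dual_elt l -> blin l.
Proof.
move=> [lin cont]; split => //.
have l0 : l 0 = 0 by have := lin 1 0 0; rewrite scale1r addr0 mul1r => h; lra.
have := cont 0; move/cvgrPdist_lt => /(_ 1 ltr01).
move=> /nbhs_norm0P [r /= r0 hr].
exists (2 / r); split; first by rewrite divr_ge0 // ltW.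
move=> z.
have [->|zn0] := eqVneq z 0; first by rewrite l0 !normr0 mulr0.
have nz : 0 < `|z| by rewrite normr_gt0.
pose t := r / (2 * `|z|).
have t0 : 0 < t by rewrite divr_gt0 // mulr_gt0.
have : `|t *: z| < r.
  rewrite normrZ gtr0_norm // /t.
  have -> : r / (2 * `|z|) * `|z| = r / 2.
    by field; rewrite gt_eqF.
  lra.
move/hr; rewrite l0 add0r normrN.
have -> : l (t *: z) = t * l z by have := lin t z 0; rewrite !addr0 l0 addr0.
rewrite normrM gtr0_norm // /t => h.
have h2 : `|l z| < (2 * `|z|) / r.
  rewrite ltr_pdivlMr //.
  move: h; rewrite mulrC mulrA ltr_pdivrMr ?mulr_gt0 // mul1r. lra.
rewrite mulrC mulrA; apply: ltW; by rewrite (mulrC `|z|).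
Qed.

Lemma norming (y : Y) : exists psi, [/\ blin psi, (forall z, psi z <= `|z|) & psi y = `|y|].
Proof.
have hom : forall (t : R) (x : Y), 0 < t -> `|t *: x| = t * `|x|.
  by move=> t x t0; rewrite normrZ gtr0_norm.
have [psi [lin le eq]] := @HB_exists R Y (fun z => `|z|) (@ler_normD _ _) hom y.
exists psi; split => //; split => //; exists 1; split => // z.
have psi0 : psi 0 = 0 by have := lin 1 0 0; rewrite scale1r addr0 mul1r => h; lra.
have psiN : psi (- z) = - psi z.
  by have := lin (-1) z 0; rewrite !addr0 scaleN1r mulN1r psi0 addr0.
have := le (- z); have := le z; rewrite normrN psiN mul1r ler_norml => h1 h2.
apply/andP; split; lra.
Qed.

Lemma sc_comb (SC : strictly_convex Y) (y0 a b : Y) (w : R) :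
  `|y0| = 1 -> `|a| <= 1 -> `|b| <= 1 -> 0 < w -> w < 1 ->
  y0 = w *: a + (1 - w) *: b -> a = y0.
Proof.
move=> n0 na nb w0 w1 e.
have h1 : `|y0| <= w * `|a| + (1 - w) * `|b|.
  rewrite {1}e; apply: le_trans (ler_normD _ _) _.
  rewrite !normrZ !ger0_norm // ?subr_ge0 ?ltW //.
rewrite n0 in h1.
have na1 : `|a| = 1 by apply/eqP; rewrite eq_le na /=; nra.
have nb1 : `|b| = 1 by apply/eqP; rewrite eq_le nb /=; nra.
have [ab|ab] := eqVneq a b.
  by rewrite e -ab -scalerDl addrC subrK scale1r.
exfalso.
have ab' : a <> b by apply/eqP.
have hm := SC a b na1 nb1 ab'.
set m := 2^-1 *: (a + b) in hm.
have [wle|wgt] := lerP w (2^-1).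
  have e2 : y0 = (2 * w) *: m + (1 - 2 * w) *: b.
    rewrite e /m scalerA scalerDr -addrA -scalerDl.
    by congr (_ *: _ + _ *: _); field.
  have : `|y0| < 1.
    rewrite e2; apply: le_lt_trans (ler_normD _ _) _.
    rewrite normrZ (normrZ (1 - 2 * w)) !ger0_norm ?nb1; nra.
  by rewrite n0 ltxx.
have e2 : y0 = (2 * w - 1) *: a + (2 * (1 - w)) *: m.
  rewrite e /m scalerA scalerDr addrA -scalerDl.
  by congr (_ *: _ + _ *: _); field.
have : `|y0| < 1.
  rewrite e2; apply: le_lt_trans (ler_normD _ _) _.
  rewrite normrZ (normrZ (2 * (1 - w))) !ger0_norm ?na1; nra.
by rewrite n0 ltxx.
Qed.

End Lin.
Section PR.
Variables (R : realType) (Y : normedModType R) (S : set Y).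
Hypothesis Sb : forall s, S s -> `|s| <= 1.

Fixpoint validl (l : seq (R * Y)) : Prop :=
  if l is x :: l' then (0 <= x.1 /\ S x.2) /\ validl l' else True.

Definition sumv (l : seq (R * Y)) : Y := \sum_(x <- l) x.1 *: x.2.
Definition sumw (l : seq (R * Y)) : R := \sum_(x <- l) x.1.

Lemma validl_cat l1 l2 : validl l1 -> validl l2 -> validl (l1 ++ l2).
Proof. by elim: l1 => //= x l IH [h1 h2] h3; split => //; apply: IH. Qed.

Definition scalel (t : R) (l : seq (R * Y)) := map (fun x => (t * x.1, x.2)) l.

Lemma validl_scale t l : 0 <= t -> validl l -> validl (scalel t l).
Proof. by move=> t0; elim: l => //= x l IH [[h1 h2] h3]; split; [split => //; exact: mulr_ge0|exact: IH]. Qed.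

Lemma sumv_cat l1 l2 : sumv (l1 ++ l2) = sumv l1 + sumv l2.
Proof. by rewrite /sumv big_cat. Qed.
Lemma sumw_cat l1 l2 : sumw (l1 ++ l2) = sumw l1 + sumw l2.
Proof. by rewrite /sumw big_cat. Qed.
Lemma sumv_scale t l : sumv (scalel t l) = t *: sumv l.
Proof.
rewrite /sumv /scalel big_map; elim: l => [|x l IH]; first by rewrite !big_nil scaler0.
by rewrite !big_cons IH scalerDr scalerA.
Qed.
Lemma sumw_scale t l : sumw (scalel t l) = t * sumw l.
Proof.
rewrite /sumw /scalel big_map; elim: l => [|x l IH]; first by rewrite !big_nil mulr0.
by rewrite !big_cons IH mulrDr.
Qed.

Lemma sumw_ge0 l : validl l -> 0 <= sumw l.
Proof.
rewrite /sumw; elim: l => [|x l IH]; first by rewrite big_nil.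
by move=> /= [[h1 _] h2]; rewrite big_cons addr_ge0 // IH.
Qed.

Lemma norm_sumv l : validl l -> `|sumv l| <= sumw l.
Proof.
rewrite /sumv /sumw; elim: l => [|x l IH]; first by rewrite !big_nil normr0.
move=> /= [[h1 h2] h3]; rewrite !big_cons.
apply: le_trans (ler_normD _ _) _; apply: lerD; last exact: IH.
rewrite normrZ ger0_norm //; have := Sb h2; nra.
Qed.

Variable Rr : R.
Hypothesis Rr0 : 0 < Rr.

Definition Ep (z : Y) := [set e | exists l, validl l /\ e = Rr * `|z - sumv l| + sumw l].
Definition pR z := inf (Ep z).

Lemma Ep_ne z : Ep z !=set0.
Proof. exists (Rr * `|z - sumv [::]| + sumw [::]); by exists [::]. Qed.

Lemma Ep_lb z : lbound (Ep z) 0.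
Proof.
move=> _ [l [vl ->]]; apply: addr_ge0; first by rewrite mulr_ge0 // ltW.
exact: sumw_ge0.
Qed.

Lemma Ep_hasinf z : has_inf (Ep z).
Proof. split; first exact: Ep_ne. by exists 0; apply: Ep_lb. Qed.

Lemma pR_le z e : Ep z e -> pR z <= e.
Proof. move=> h; apply: ge_inf => //; by exists 0; apply: Ep_lb. Qed.

Lemma pR_ge0 z : 0 <= pR z.
Proof. apply: lb_le_inf; [exact: Ep_ne | exact: Ep_lb]. Qed.

Lemma pR_norm z : pR z <= Rr * `|z|.
Proof.
apply: pR_le; exists [::]; split => //.
by rewrite /sumv /sumw !big_nil subr0 addr0.
Qed.

Lemma pR_S s : S s -> pR s <= 1.
Proof.
move=> Ss; apply: pR_le; exists [:: (1, s)]; split => //=.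
by rewrite /sumv /sumw !big_cons !big_nil scale1r addr0 subrr normr0 mulr0 add0r addr0.
Qed.

Lemma pR_sub x y : pR (x + y) <= pR x + pR y.
Proof.
apply/ler_addgt0Pr => eta eta0.
have [e1 [l1 [v1 ->]] h1] := inf_adherent (divr_gt0 eta0 (ltr0n R 2)) (Ep_hasinf x).
have [e2 [l2 [v2 ->]] h2] := inf_adherent (divr_gt0 eta0 (ltr0n R 2)) (Ep_hasinf y).
have : pR (x + y) <= Rr * `|x + y - sumv (l1 ++ l2)| + sumw (l1 ++ l2).
  apply: pR_le; exists (l1 ++ l2); split => //; exact: validl_cat.
rewrite sumv_cat sumw_cat.
have : `|x + y - (sumv l1 + sumv l2)| <= `|x - sumv l1| + `|y - sumv l2|.
  rewrite opprD addrACA; exact: ler_normD.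
rewrite -/(pR x) -/(pR y) in h1 h2.
move=> hn; have hm : Rr * `|x + y - (sumv l1 + sumv l2)| <= Rr * (`|x - sumv l1| + `|y - sumv l2|).
  by rewrite ler_pM2l.
rewrite mulrDr in hm.
lra.
Qed.

Lemma pR_hom_le (t : R) x : 0 < t -> pR (t *: x) <= t * pR x.
Proof.
move=> t0; rewrite mulrC -ler_pdivrMr //.
apply: lb_le_inf; first exact: Ep_ne.
move=> _ [l [vl ->]]; rewrite ler_pdivrMr //.
apply: pR_le; exists (scalel t l); split; first exact: validl_scale (ltW t0) vl.
rewrite sumv_scale sumw_scale -scalerBr normrZ gtr0_norm //.
ring.
Qed.

Lemma pR_hom (t : R) x : 0 < t -> pR (t *: x) = t * pR x.
Proof.
move=> t0; apply/eqP; rewrite eq_le pR_hom_le //=.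
have ti : 0 < t^-1 by rewrite invr_gt0.
have := pR_hom_le (t *: x) ti; rewrite scalerA mulVf ?gt_eqF // scale1r => h.
rewrite -ler_pdivlMl //; by rewrite mulrC.
Qed.

End PR.
Lemma sum_delta (R : realType) (K m : nat) (a : R) : (m < K)%N ->
  \sum_(c < K) (if (c : nat) == m then a else 0) = a.
Proof.
elim: K => [//|K IH] mK.
rewrite big_ord_recr /=.
move: mK; rewrite ltnS leq_eqVlt => /orP[/eqP ->|mK].
  rewrite eqxx big1 ?add0r // => i _; by rewrite ltn_eqF.
by rewrite IH // gtn_eqF // addr0.
Qed.

Lemma sum_max (R : realType) (K : nat) (a : nat -> R) : (0 < K)%N ->
  exists c, (c < K)%N /\ \sum_(i < K) a i <= K%:R * a c.
Proof.
elim: K => [//|K IH] _.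
have [->|K0] := eqVneq K 0%N.
  by exists 0%N; split => //; rewrite big_ord1 mul1r.
have [c [cK hc]] : exists c, (c < K)%N /\ \sum_(i < K) a i <= K%:R * a c by apply: IH; rewrite lt0n.
rewrite big_ord_recr /=.
have [le|lt] := lerP (a c) (a K).
  exists K; split => //; rewrite -natr1 mulrDl mul1r.
  have : K%:R * a c <= K%:R * a K by rewrite ler_wpM2l // ler0n.
  lra.
exists c; split; first by apply: ltnW.
rewrite -natr1 mulrDl mul1r; lra.
Qed.

Section Group.
Variables (R : realType) (Y : normedModType R) (S : set Y).
Hypothesis Sb : forall s, S s -> `|s| <= 1.
Variables (K : nat) (phi : nat -> Y -> R) (beta : nat -> R) (pc : Y -> nat).
Hypothesis pcP : forall s, S s -> (pc s < K)%N /\ beta (pc s) <= phi (pc s) s.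
Hypothesis phib : forall c, blin (phi c).

Definition Wc c (l : seq (R * Y)) := \sum_(x <- l | pc x.2 == c) x.1.
Definition Pc c (l : seq (R * Y)) := \sum_(x <- l | pc x.2 == c) x.1 *: x.2.

Lemma Pc_norm c l : validl S l -> `|Pc c l| <= Wc c l.
Proof.
rewrite /Pc /Wc; elim: l => [|x l IH]; first by rewrite !big_nil normr0.
move=> /= [[h1 h2] h3]; rewrite !big_cons.
case: ifP => _; last exact: IH.
apply: le_trans (ler_normD _ _) _; apply: lerD; last exact: IH.
rewrite normrZ ger0_norm //; have := Sb h2; nra.
Qed.

Lemma Pc_phi c l : validl S l -> beta c * Wc c l <= phi c (Pc c l).
Proof.
rewrite /Pc /Wc; elim: l => [|x l IH]; first by rewrite !big_nil mulr0 (blin0 (phib c)).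
move=> /= [[h1 h2] h3]; rewrite !big_cons.
case: ifP => [/eqP e|_]; last exact: IH.
rewrite (blinD (phib c)) (blinZ (phib c)) mulrDr.
apply: lerD; last exact: IH.
have := (pcP h2).2; rewrite e => hb.
rewrite mulrC; exact: ler_wpM2l.
Qed.

Lemma Pc_rest c l : validl S l -> `|sumv l - Pc c l| <= sumw l - Wc c l.
Proof.
rewrite /Pc /Wc /sumv /sumw; elim: l => [|x l IH]; first by rewrite !big_nil subrr normr0 subrr.
move=> /= [[h1 h2] h3]; rewrite !big_cons.
case: ifP => _.
  rewrite opprD addrACA subrr add0r opprD addrACA subrr add0r; exact: IH.
rewrite -addrA -[X in _ <= X]addrA.
apply: le_trans (ler_normD _ _) _; apply: lerD; last exact: IH.
rewrite normrZ ger0_norm //; have := Sb h2; nra.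
Qed.

Lemma Wc_sum l : validl S l -> \sum_(c < K) Wc c l = sumw l.
Proof.
rewrite /Wc /sumw; elim: l => [|x l IH].
  by move=> _; rewrite big_nil big1 // => c _; rewrite big_nil.
move=> /= [[h1 h2] h3]; rewrite big_cons -(IH h3).
under eq_bigr do rewrite big_cons.
rewrite [in RHS](_ : x.1 = \sum_(c < K) (if (c : nat) == pc x.2 then x.1 else 0)); last first.
  by rewrite sum_delta // (pcP h2).1.
rewrite -big_split /=.
apply: eq_bigr => c _.
case: eqP => [e|ne]; case: eqP => [e'|ne'] //=; rewrite ?add0r //; by [case: ne | case: ne'].
Qed.

Lemma Wc_big l : (0 < K)%N -> validl S l -> exists c, (c < K)%N /\ sumw l <= K%:R * Wc c l.
Proof.
move=> K0 vl; rewrite -(Wc_sum vl).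
exact: (sum_max (fun c => Wc c l) K0).
Qed.

End Group.
Lemma small_inv (R : realType) (eta : R) : 0 < eta ->
  exists N, forall n, (N <= n)%N -> 2 / n.+1%:R < eta.
Proof.
move=> eta0.
have h := @archi_boundP R (2 / eta) (ltW (divr_gt0 (ltr0n R 2) eta0)).
exists (Num.Def.archi_bound (2 / eta)) => n Nn.
have : (Num.Def.archi_bound (2 / eta))%:R <= n%:R :> R by rewrite ler_nat.
move=> h2.
have hn : 2 / eta < n.+1%:R by rewrite -natr1; lra.
rewrite ltr_pdivrMr ?ltr0Sn //.
by rewrite mulrC -ltr_pdivrMr.
Qed.

Lemma term_le_sum (R : realType) (F : nat -> R) k i :
  (forall j, 0 <= F j) -> (i < k)%N -> F i <= \sum_(j < k) F j.
Proof.
move=> F0; elim: k => [//|k IH].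
rewrite ltnS leq_eqVlt big_ord_recr /= => /orP[/eqP ->|ik].
  by rewrite lerDr sumr_ge0.
by apply: le_trans (IH ik) _; rewrite lerDl.
Qed.

Lemma close_le (R : realType) (a b : R) : (forall eta, 0 < eta -> a <= b + eta) -> a <= b.
Proof. by move=> h; apply/ler_addgt0Pr. Qed.

Lemma close_eq (R : realType) (a b : R) : (forall eta, 0 < eta -> `|a - b| < eta) -> a = b.
Proof.
move=> h; apply/eqP; rewrite eq_le; apply/andP; split; apply: close_le => e e0;
  have := h e e0; rewrite ltr_norml => /andP[]; lra.
Qed.

Lemma real_bound (R : realType) (t a b eta d A : R) : 0 < eta -> eta <= 4^-1 ->
  1 - 2 * eta < t -> t <= 1 + 3 * eta -> `|a - b| < 2 * eta -> `|b| <= A ->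
  eta <= d / (8 + 12 * A) -> 0 <= A -> 0 < d -> `|a / t - b| < d.
Proof.
move=> e0 e4 tlo thi hab hb hed A0 d0.
have t0 : 0 < t by lra.
have e1 : `|1 - t| <= 3 * eta by rewrite ler_norml; apply/andP; split; lra.
have eq : a / t - b = ((a - b) + (1 - t) * b) / t by field; rewrite gt_eqF.
rewrite eq normrM normfV (gtr0_norm t0).
have h1 : `|a - b + (1 - t) * b| < 2 * eta + 3 * eta * A.
  apply: le_lt_trans (ler_normD _ _) _; rewrite normrM.
  have : `|1 - t| * `|b| <= 3 * eta * A.
    apply: ler_pM => //; exact: normr_ge0.
  lra.
rewrite ltr_pdivrMr //.
have h2 : eta * (8 + 12 * A) <= d by rewrite -ler_pdivlMr //; lra.
nra.
Qed.
Section Cauchy.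
Variables (R : realType) (Y : completeNormedModType R).
Hypothesis SC : strictly_convex Y.
Hypothesis KK : kadec_klee Y.
Variable y0 : Y.
Hypothesis ny0 : `|y0| = 1.
Variable ys : Y -> R.
Hypothesis ysb : blin ys.
Hypothesis ysle : forall z, ys z <= `|z|.
Hypothesis ysy : ys y0 = 1.
Variable U : set_system nat.
Hypothesis UU : UltraFilter U.
Hypothesis Uinf : forall N, U [set n | (N <= n)%N].
Variables (P V : nat -> Y) (Wn sw : nat -> R).
Hypothesis H1 : forall n, `|y0 - (P n + V n)| < 2 / n.+1%:R.
Hypothesis H2 : forall n, `|P n| <= Wn n.
Hypothesis H3 : forall n, `|V n| <= sw n - Wn n.
Hypothesis H4 : forall n, sw n < 1 + n.+1%:R^-1.

Definition ulim (x : nat -> R) (a : R) := forall eta : R, 0 < eta -> U [set n | `|x n - a| < eta].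

Lemma Usmall (eta : R) : 0 < eta -> U [set n | 2 / n.+1%:R < eta].
Proof.
move=> e0; have [N hN] := small_inv e0.
by apply: US (Uinf N) => n /hN.
Qed.

Lemma Usw (eta : R) : 0 < eta -> U [set n | sw n < 1 + eta].
Proof.
move=> e0; apply: US (Usmall e0) => n /= h.
have h4 := H4 n; have h5 : n.+1%:R^-1 <= 2 / n.+1%:R :> R.
  by rewrite ler_pdivlMr ?ltr0Sn // mulVf ?pnatr_eq0 // ler1n.
rewrite /=; move: h h4 h5; rewrite /(_ / _); set t := n.+1%:R^-1; move=> h h4 h5; lra.
Qed.

Lemma W_le n : Wn n <= sw n.
Proof. have := H3 n; have := normr_ge0 (V n); lra. Qed.

Lemma sw_le2 n : sw n <= 2.
Proof.
have h4 := H4 n; have h5 : n.+1%:R^-1 <= 1 :> R by rewrite invf_le1 ?ler1n ?ltr0Sn.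
move: h4 h5; set t := n.+1%:R^-1; move=> h4 h5; lra.
Qed.

Lemma W_ge0 n : 0 <= Wn n.
Proof. exact: le_trans (normr_ge0 _) (H2 n). Qed.

Lemma P_le2 n : `|P n| <= 2.
Proof. have := H2 n; have := W_le n; have := sw_le2 n; lra. Qed.

Lemma V_le2 n : `|V n| <= 2.
Proof. have := H3 n; have := W_ge0 n; have := sw_le2 n; lra. Qed.

Lemma ulim_ex (x : nat -> R) (M : R) : (forall n, `|x n| <= M) -> exists a, ulim x a.
Proof. move=> h; exact: (Ulim UU h). Qed.

Lemma ulim_blin (psi : Y -> R) (Q : nat -> Y) : blin psi -> (forall n, `|Q n| <= 2) ->
  exists a, ulim (fun n => psi (Q n)) a.
Proof.
move=> [_ [C [C0 hC]]] hQ; apply: (@ulim_ex _ (C * 2)) => n.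
apply: le_trans (hC _) _; exact: ler_wpM2l.
Qed.

Lemma lim_split (psi : Y -> R) (a b : R) : blin psi ->
  ulim (fun n => psi (P n)) a -> ulim (fun n => psi (V n)) b -> a + b = psi y0.
Proof.
move=> pb ha hb; have [C [C0 hC]] := blin_lip pb.
apply: close_eq => eta e0.
have e3 : 0 < eta / 3 by rewrite divr_gt0.
have eC : 0 < eta / 3 / (C + 1) by rewrite divr_gt0 // ltr_wpDl.
have [n [[n1 n2] n3]] := Uex UU (UI UU (UI UU (ha _ e3) (hb _ e3)) (Usmall eC)).
move: n1 n2 n3 => /= n1 n2 n3.
have h := hC (P n + V n) y0.
rewrite (blinD pb) in h.
have : C * `|P n + V n - y0| <= (C + 1) * (2 / n.+1%:R).
  apply: ler_pM => //; first by lra.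
  by rewrite distrC; apply: ltW.
have : (C + 1) * (2 / n.+1%:R) < eta / 3.
  by rewrite mulrC -ltr_pdivlMr // ltr_wpDl.
move: h; rewrite !ltr_norml ler_norml => /andP[h1 h2].
move: n1 n2; rewrite !ltr_norml => /andP[n1 n1'] /andP[n2 n2'].
move=> h3 h4; apply/andP.
move: h1 h2 h3 h4; set q := (C + 1) * _; set r := C * _; move=> h1 h2 h3 h4.
split; lra.
Qed.

Lemma cauchyP (e : R) : 0 < e ->
  exists A, U A /\ forall n m, A n -> A m -> `|P n - P m| < e.
Proof.
move=> e0.
have [kk _] := KK ny0.
have e4 : 0 < e / 4 by rewrite divr_gt0.
have [k2 [m [d2 [mdual [d20 mprop]]]]] := kk _ e4.
have mb i : blin (m i) := dual_blin (mdual i).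
have [lam hlam] := choice (fun i => ulim_blin (mb i) P_le2).
have [rho hrho] := choice (fun i => ulim_blin (mb i) V_le2).
have [gP hgP] := ulim_blin ysb P_le2.
have [gV hgV] := ulim_blin ysb V_le2.
have Wb n : `|Wn n| <= 2.
  by rewrite ger0_norm ?W_ge0 //; apply: le_trans (W_le n) (sw_le2 n).
have [w hw] := @ulim_ex Wn 2 Wb.
have lr i : lam i + rho i = m i y0 := lim_split (mb i) (hlam i) (hrho i).
have gg : gP + gV = 1 by rewrite (lim_split ysb hgP hgV) ysy.
pose A2 := \sum_(i < k2) `|m i y0|.
have A20 : 0 <= A2 by apply: sumr_ge0 => i _.
have mA i : (i < k2)%N -> `|m i y0| <= A2.
  by move=> ik; exact: (@term_le_sum R (fun j => `|m j y0|) k2 i (fun j => normr_ge0 _) ik).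
pose eta := Num.min (4^-1) (Num.min (e / 12) (d2 / (8 + 12 * A2))).
have eta0 : 0 < eta.
  rewrite /eta !lt_min; apply/andP; split; first by rewrite invr_gt0.
  by apply/andP; split; rewrite divr_gt0 //; lra.
have eta4 : eta <= 4^-1 by rewrite /eta ge_min lexx.
have etae : eta <= e / 12 by rewrite /eta !ge_min lexx orbT.
have etad : eta <= d2 / (8 + 12 * A2) by rewrite /eta !ge_min lexx !orbT.
pose A := [set n | (forall i, (i < k2)%N -> `|m i (P n) - lam i| < eta) /\
                   `|ys (P n) - gP| < eta /\ `|Wn n - w| < eta].
pose B := [set n | (forall i, (i < k2)%N -> `|m i (V n) - rho i| < eta) /\
                   `|ys (V n) - gV| < eta /\ `|Wn n - w| < eta /\ sw n < 1 + eta].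
have UA : U A.
  apply: US (UI UU (Ubig UU (fun i (_ : (i < k2)%N) => hlam i eta eta0))
               (UI UU (hgP _ eta0) (hw _ eta0))) => n [h1 [h2 h3]]; split => //.
have UB : U B.
  apply: US (UI UU (Ubig UU (fun i (_ : (i < k2)%N) => hrho i eta eta0))
               (UI UU (hgV _ eta0) (UI UU (hw _ eta0) (Usw eta0)))) => n [h1 [h2 [h3 h4]]]; split => //.
have key n n' : A n -> B n' -> `|P n + V n' - y0| < e / 2.
  move=> [An1 [An2 An3]] [Bn1 [Bn2 [Bn3 Bn4]]].
  pose u := P n + V n'.
  have ysu : 1 - 2 * eta < ys u.
    rewrite /u (blinD ysb); move: An2 Bn2; rewrite !ltr_norml => /andP[? ?] /andP[? ?]; lra.
  have nlo : 1 - 2 * eta < `|u| by apply: lt_le_trans ysu (ysle u).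
  have nhi : `|u| <= 1 + 3 * eta.
    apply: le_trans (ler_normD _ _) _.
    have := H2 n; have := H3 n'; move: An3 Bn3; rewrite !ltr_norml => /andP[? ?] /andP[? ?]; lra.
  have t0 : 0 < `|u| by lra.
  pose z := `|u|^-1 *: u.
  have nz : `|z| = 1 by rewrite /z normrZ normfV normr_id mulVf ?gt_eqF.
  have hz : forall i, (i < k2)%N -> `|m i z - m i y0| < d2.
    move=> i ik; rewrite /z (blinZ (mb i)) mulrC.
    apply: (real_bound eta0 eta4 nlo nhi _ (mA i ik) etad A20 d20).
    rewrite /u (blinD (mb i)) -(lr i).
    have h1 := An1 i ik; have h2 := Bn1 i ik; move: h1 h2.
    rewrite !ltr_norml => /andP[? ?] /andP[? ?]; apply/andP; split; lra.
  have := mprop z nz hz => hz2.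
  have : `|u - z| <= 3 * eta.
    have -> : u - z = (1 - `|u|^-1) *: u by rewrite /z scalerBl scale1r.
    rewrite normrZ -[X in _ * X]normr_id -normrM.
    have -> : (1 - `|u|^-1) * `|u| = `|u| - 1 by field; rewrite gt_eqF.
    rewrite ler_norml; apply/andP; split; lra.
  have := normr_ge0 (u - z).
  move=> _ huz; rewrite -/u.
  have : `|u - y0| <= `|u - z| + `|z - y0|.
    rewrite (_ : u - y0 = (u - z) + (z - y0)); first exact: ler_normD.
    by rewrite addrA subrK.
  lra.
exists A; split => // n1 n2 A1 A2'.
have [n' Bn'] := Uex UU UB.
have h1 := key _ _ A1 Bn'; have h2 := key _ _ A2' Bn'.
have : `|P n1 - P n2| <= `|P n1 + V n' - y0| + `|P n2 + V n' - y0|.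
  have e3 : forall a b c : Y, a - b = (a + c) - (b + c).
    by move=> a b c; rewrite opprD addrACA subrr addr0.
  rewrite (e3 _ _ (V n' - y0)) !addrA.
  apply: le_trans (ler_normD _ _) _; by rewrite normrN.
lra.
Qed.

Lemma W_abs n : `|Wn n| <= 2.
Proof. by rewrite ger0_norm ?W_ge0 //; apply: le_trans (W_le n) (sw_le2 n). Qed.

Variables (phi : Y -> R) (beta : R).
Hypothesis phib : blin phi.
Hypothesis phiy : phi y0 < beta.
Hypothesis H6 : forall n, beta * Wn n <= phi (P n).
Hypothesis H7 : exists alpha, 0 < alpha /\ U [set n | alpha <= Wn n].

Lemma final : False.
Proof.
have [Pst hP] := @UlimY R U UU Y P cauchyP.
have [w hw] := ulim_ex W_abs.
have f1 : `|Pst| <= w.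
  apply: close_le => eta e0.
  have e2 : 0 < eta / 2 by rewrite divr_gt0.
  have [n [/= n1 n2]] := Uex UU (UI UU (hP _ e2) (hw _ e2)).
  have : `|Pst| <= `|P n| + `|P n - Pst|.
    by have := ler_normD (P n) (Pst - P n); rewrite addrCA subrr addr0 -opprB normrN.
  have := H2 n; move: n2; rewrite ltr_norml => /andP[? ?]; lra.
have f2 : `|y0 - Pst| <= 1 - w.
  apply: close_le => eta e0.
  have e4 : 0 < eta / 4 by rewrite divr_gt0.
  have [n [[[/= n1 n2] n3] n4]] :=
    Uex UU (UI UU (UI UU (UI UU (hP _ e4) (hw _ e4)) (Usw e4)) (Usmall e4)).
  have -> : y0 - Pst = (y0 - (P n + V n)) + V n + (P n - Pst).
    by rewrite opprD (addrA y0) subrK (addrA (y0 - P n)) subrK.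
  have h := H1 n; have h3 := H3 n.
  have : `|y0 - (P n + V n) + V n + (P n - Pst)| <=
      `|y0 - (P n + V n)| + `|V n| + `|P n - Pst|.
    apply: le_trans (ler_normD _ _) _; rewrite lerD2r; exact: ler_normD.
  move: n2 h n4; set q := 2 / _; move=> n2 h n4.
  rewrite ltr_norml in n2; move/andP: n2 => [? ?]; simpl in n3; lra.
have [C [C0 hC]] := blin_lip phib.
have f3 : beta * w <= phi Pst.
  apply: close_le => eta e0.
  have e' : 0 < eta / (C + `|beta| + 1).
    by rewrite divr_gt0 //; have := normr_ge0 beta; lra.
  have [n [/= n1 n2]] := Uex UU (UI UU (hP _ e') (hw _ e')).
  set q := eta / _ in e' n1 n2.
  have hCb : 0 < C + `|beta| + 1 by have := normr_ge0 beta; lra.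
  have hq : (C + `|beta| + 1) * q = eta by rewrite /q; field; rewrite gt_eqF.
  have h6 := H6 n.
  have h7 : `|phi (P n) - phi Pst| <= C * q.
    apply: le_trans (hC _ _) _; apply: ler_wpM2l => //; exact: ltW.
  have h8 : `|beta * Wn n - beta * w| <= `|beta| * q.
    rewrite -mulrBr normrM; apply: ler_wpM2l => //; exact: ltW.
  move: h7 h8; rewrite !ler_norml => /andP[? ?] /andP[? ?].
  have : 0 <= q by exact: ltW.
  move=> ?; rewrite !mulrDl mul1r in hq; lra.
have [alpha [a0 Ua]] := H7.
have f4 : alpha <= w.
  apply: close_le => eta e0.
  have [n [/= n1 n2]] := Uex UU (UI UU Ua (hw _ e0)).
  move: n2; rewrite ltr_norml => /andP[? ?]; lra.
have w0 : 0 < w by lra.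
have w1 : w <= 1 by have := normr_ge0 (y0 - Pst); lra.
have [we|wlt] := eqVneq w 1.
  rewrite we subrr in f2.
  have : y0 - Pst = 0 by apply/normr0_eq0; apply/eqP; rewrite eq_le f2 normr_ge0.
  move/eqP; rewrite subr_eq0 => /eqP e.
  rewrite we mulr1 -e in f3; by move: (lt_le_trans phiy f3); rewrite ltxx.
have wl : w < 1 by rewrite lt_neqAle wlt w1.
have ab := @sc_comb R Y SC y0 (w^-1 *: Pst) ((1 - w)^-1 *: (y0 - Pst)) w ny0.
have : w^-1 *: Pst = y0.
  apply: ab => //.
  - rewrite normrZ normfV gtr0_norm // ler_pdivrMl // mulr1 //.
  - rewrite normrZ normfV gtr0_norm ?subr_gt0 // ler_pdivrMl ?subr_gt0 // mulr1 //.
  - rewrite !scalerA mulfV ?gt_eqF // mulfV ?gt_eqF ?subr_gt0 // !scale1r.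
    by rewrite addrC subrK.
move=> e.
have : Pst = w *: y0 by rewrite -e scalerA mulfV ?gt_eqF // scale1r.
move=> ep; rewrite ep (blinZ phib) in f3.
have : beta <= phi y0 by rewrite -(ler_pM2l w0) mulrC.
by move=> h; move: (lt_le_trans phiy h); rewrite ltxx.
Qed.

End Cauchy.
Lemma coreB (R : realType) (Y : completeNormedModType R) (SC : strictly_convex Y)
  (KK : kadec_klee Y) (S : set Y) (y0 : Y) (ys : Y -> R) :
  (forall s, S s -> `|s| <= 1) -> `|y0| = 1 -> blin ys -> (forall z, ys z <= `|z|) ->
  ys y0 = 1 ->
  (forall psi, blin psi -> (forall s, S s -> psi s <= 1) -> psi y0 <= 1) ->
  forall (K : nat) (phi : nat -> Y -> R) (beta : nat -> R), (0 < K)%N ->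
  (forall c, blin (phi c)) -> (forall c, phi c y0 < beta c) ->
  (forall s, S s -> exists c, (c < K)%N /\ beta c <= phi c s) -> False.
Proof.
move=> Sb ny0 ysb ysle ysy sep K phi beta K0 phib phiy cover.
have hl : forall n : nat, exists l, validl S l /\
    n.+1%:R * `|y0 - sumv l| + sumw l < 1 + n.+1%:R^-1.
  move=> n.
  have Rr0 : 0 < n.+1%:R :> R by rewrite ltr0Sn.
  have [psi [lin le eq]] := @HB_exists R Y (pR S n.+1%:R) (pR_sub S Rr0) (pR_hom S Rr0) y0.
  have psi0 : psi 0 = 0 by have := lin 1 0 0; rewrite scale1r addr0 mul1r => h; lra.
  have pb : blin psi.
    split => //; exists n.+1%:R; split; first exact: ltW.
    move=> z; have psiN : psi (- z) = - psi z.
      by have := lin (-1) z 0; rewrite !addr0 scaleN1r mulN1r psi0 addr0.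
    have h1 := le_trans (le z) (pR_norm S Rr0 z).
    have h2 := le_trans (le (- z)) (pR_norm S Rr0 (- z)).
    rewrite psiN normrN in h2; rewrite ler_norml; apply/andP; split; lra.
  have h := sep psi pb (fun s Ss => le_trans (le s) (pR_S Rr0 Ss)).
  rewrite eq in h.
  have hlt : pR S n.+1%:R y0 < 1 + n.+1%:R^-1.
    by apply: le_lt_trans h _; rewrite ltrDl invr_gt0.
  have [e [l [vl ->]] hl] := inf_lt (Ep_ne S n.+1%:R y0) hlt.
  by exists l.
have [L hL] := choice hl.
have hc : forall s, exists c, S s -> (c < K)%N /\ beta c <= phi c s.
  move=> s; case: (pselect (S s)) => [/cover [c hc]|ns]; first by exists c.
  by exists 0%N.
have [pc pcP0] := choice hc.
have [U [UU Uge]] := @ultraFilterLemma nat (\oo : set_system nat) _.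
have Uinf : forall N, U [set n | (N <= n)%N].
  by move=> N; apply: Uge; exists N.
pose z n := sumv (L n).
have hz n : `|y0 - z n| < 2 / n.+1%:R.
  have [vl h] := hL n.
  have := sumw_ge0 vl; rewrite -/(z n).
  have hinv : n.+1%:R^-1 <= 1 :> R by rewrite invf_le1 ?ler1n ?ltr0Sn.
  move=> h0; rewrite ltr_pdivlMr ?ltr0Sn // mulrC.
  move: h hinv; set t := n.+1%:R^-1; set a := _ * `|_|; move=> h hinv; lra.
have Uc : U [set n | exists c, (c < K)%N /\ 1 <= 2 * K%:R * Wc pc c (L n)].
  apply: US (Uinf 3%N) => n /= n3.
  have [vl _] := hL n.
  have [c [cK hc2]] := Wc_big pcP0 K0 vl.
  exists c; split => //.
  have h1 := hz n.
  have h2 : 2 / n.+1%:R <= 2^-1 :> R.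
    rewrite ler_pdivrMr ?ltr0Sn // ler_pdivlMl //.
    have : (4 <= n.+1)%N by [].
    rewrite -(ler_nat R); lra.
  have h3 : `|z n| <= sumw (L n) := norm_sumv Sb vl.
  have h4 : `|y0| <= `|z n| + `|y0 - z n|.
    by have := ler_normD (z n) (y0 - z n); rewrite addrCA subrr addr0.
  rewrite -mulrA.
  move: h1 h2; set q := 2 / _; move=> h1 h2.
  have : 2^-1 < K%:R * Wc pc c (L n) by lra.
  move=> h5; lra.
have [c0 [c0K Uc0]] := Ufin UU Uc.
pose P n := Pc pc c0 (L n).
pose V n := z n - P n.
pose Wn n := Wc pc c0 (L n).
pose sw n := sumw (L n).
apply: (@final R Y SC KK y0 ny0 ys ysb ysle ysy U UU Uinf P V Wn sw _ _ _ _ (phi c0) (beta c0) (phib c0) (phiy c0)).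
- by move=> n; rewrite /V addrCA subrr addr0; exact: hz.
- move=> n; rewrite /P /Wn; exact: Pc_norm Sb pc c0 _ (proj1 (hL n)).
- move=> n; rewrite /V /P /Wn /sw /z; exact: Pc_rest Sb pc c0 _ (proj1 (hL n)).
- move=> n; have [vl h] := hL n; have := normr_ge0 (y0 - z n).
  rewrite /sw; move: h; set t := n.+1%:R^-1; set a := _ * `|_|.
  have : 0 <= a by rewrite /a mulr_ge0 // ler0n.
  move=> ha h _; lra.
- move=> n; rewrite /P /Wn; exact: Pc_phi pcP0 phib c0 _ (proj1 (hL n)).
- exists (2 * K%:R)^-1; split; first by rewrite invr_gt0 mulr_gt0 // ltr0n.
  have h2K : 0 < 2 * K%:R :> R by rewrite mulr_gt0 // ltr0n.
  apply: US Uc0 => n /= h.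
  by rewrite -(ler_pM2l h2K) mulfV ?gt_eqF.
Qed.
Lemma blin_neg (R : realType) (Y : normedModType R) (psi : Y -> R) :
  blin psi -> blin (fun z => - psi z).
Proof.
move=> [lin [C [C0 hC]]]; split.
  by move=> a x y; rewrite lin opprD mulrN.
by exists C; split => // z; rewrite normrN.
Qed.

Lemma real_bound2 (R : realType) (t a b d A tau : R) : 0 < d -> 0 <= A ->
  tau <= 2^-1 -> 1 - tau < t -> t <= 1 -> d <= `|a - b| -> `|b| <= A -> tau * (2 * (d + A)) <= d ->
  d / 2 <= `|t * a - b|.
Proof.
move=> d0 A0 tau2 tlo thi hab hb htau.
have t0 : 0 <= t by lra.
have e : t * a - b = t * (a - b) + (t - 1) * b by ring.
have h1 : t * `|a - b| - (1 - t) * `|b| <= `|t * a - b|.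
  rewrite e.
  have := ler_normD (t * (a - b) + (t - 1) * b) (- ((t - 1) * b)).
  rewrite addrK normrN !normrM (ger0_norm t0) (ler0_norm (x := t - 1)); last by lra.
  lra.
have : t * `|a - b| >= t * d by apply: ler_wpM2l.
have : (1 - t) * `|b| <= (1 - t) * A by apply: ler_wpM2l => //; lra.
nra.
Qed.

Theorem core (R : realType) (Y : completeNormedModType R) (SC : strictly_convex Y)
  (KK : kadec_klee Y) (S : set Y) (y0 : Y) :
  (forall s, S s -> `|s| <= 1) -> `|y0| = 1 ->
  (forall psi, blin psi -> (forall s, S s -> psi s <= 1) -> psi y0 <= 1) ->
  forall eps : R, 0 < eps -> exists s, S s /\ `|s - y0| < eps.
Proof.
move=> Sb ny0 sep eps e0; apply: contrapT => hn.
have far : forall s, S s -> eps <= `|s - y0|.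
  move=> s Ss; rewrite leNgt; apply/negP => h; apply: hn; by exists s.
have [ys [ysb ysle ysy0]] := norming y0.
rewrite ny0 in ysy0.
have [kk _] := KK y0 ny0.
have e2 : 0 < eps / 2 by rewrite divr_gt0.
have [k [l [d [ldual [d0 lprop]]]]] := kk _ e2.
have lb i : blin (l i) := dual_blin (ldual i).
pose A := \sum_(i < k) `|l i y0|.
have A0 : 0 <= A by apply: sumr_ge0 => i _.
have lA i : (i < k)%N -> `|l i y0| <= A.
  by move=> ik; exact: (@term_le_sum R (fun j => `|l j y0|) k i (fun j => normr_ge0 _) ik).
pose tau := Num.min (2^-1) (Num.min (eps / 2) (d / (2 * (d + A)))).
have dA : 0 < 2 * (d + A) by rewrite mulr_gt0 //; lra.
have tau0 : 0 < tau.
  rewrite /tau !lt_min; apply/andP; split; first by rewrite invr_gt0.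
  by apply/andP; split; rewrite divr_gt0.
have tau2 : tau <= 2^-1 by rewrite /tau ge_min lexx.
have taue : tau <= eps / 2 by rewrite /tau !ge_min lexx orbT.
have taud : tau * (2 * (d + A)) <= d.
  by rewrite -ler_pdivlMr // /tau !ge_min lexx !orbT.
pose phi (c : nat) : Y -> R := if c == 0%N then (fun z => - ys z)
  else if odd c then l (c.-1./2) else (fun z => - l (c.-1./2) z).
pose beta (c : nat) : R := if c == 0%N then - (1 - tau)
  else if odd c then l (c.-1./2) y0 + d / 2 else - l (c.-1./2) y0 + d / 2.
apply: (@coreB R Y SC KK S y0 ys Sb ny0 ysb ysle ysy0 sep (k.*2.+1) phi beta).
- by [].
- move=> c; rewrite /phi; case: ifP => _; first exact: blin_neg.
  case: ifP => _; [exact: lb | exact: blin_neg].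
- move=> c; rewrite /phi /beta; case: ifP => _; first by rewrite ysy0; lra.
  case: ifP => _; have := d0; lra.
move=> s Ss.
have [ysl|ysg] := lerP (ys s) (1 - tau).
  by exists 0%N; split => //; rewrite /phi /beta /=; lra.
have ns : 1 - tau < `|s| := lt_le_trans ysg (ysle s).
have ns1 : `|s| <= 1 := Sb s Ss.
have t0 : 0 < `|s| by lra.
pose z := `|s|^-1 *: s.
have nz : `|z| = 1 by rewrite /z normrZ normfV normr_id mulVf ?gt_eqF.
have hsz : `|s - z| <= tau.
  have -> : s - z = (1 - `|s|^-1) *: s by rewrite /z scalerBl scale1r.
  rewrite normrZ -[X in _ * X]normr_id -normrM.
  have -> : (1 - `|s|^-1) * `|s| = `|s| - 1 by field; rewrite gt_eqF.
  rewrite ler_norml; apply/andP; split; lra.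
have hzy : ~ (`|z - y0| < eps / 2).
  move=> h; have := far s Ss.
  have : `|s - y0| <= `|s - z| + `|z - y0|.
    rewrite (_ : s - y0 = (s - z) + (z - y0)); first exact: ler_normD.
    by rewrite addrA subrK.
  lra.
have [i [ik hi]] : exists i, (i < k)%N /\ d <= `|l i z - l i y0|.
  apply: contrapT => hne; apply: hzy; apply: lprop => // i ik.
  rewrite ltNge; apply/negP => h; apply: hne; by exists i.
have hls : d / 2 <= `|l i s - l i y0|.
  have -> : l i s = `|s| * l i z.
    by rewrite /z (blinZ (lb i)) mulrA mulfV ?gt_eqF ?mul1r.
  exact: real_bound2 d0 A0 tau2 ns ns1 hi (lA i ik) taud.
have [hp|hm] := lerP (d / 2) (l i s - l i y0).
  exists (i.*2.+1); split; first by rewrite ltnS ltn_double.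
  rewrite /phi /beta /= odd_double /= doubleK; lra.
exists (i.*2.+2); split; first by rewrite ltnS -doubleS leq_double.
rewrite /phi /beta /= odd_double /= uphalf_double.
move: hls; rewrite ler_normr => /orP[?|?]; lra.
Qed.
Section Main.
Variables (R : realType) (M : Type) (d : M -> M -> R) (x0 : M).
Variable (Y : completeNormedModType R).
Hypothesis dm : is_metric d.
Hypothesis exx : exists x : M, x <> x0.
Variable f : M -> Y.
Hypothesis Lf : Lip0 d x0 f.

Let Ef := [set r : R | exists p q : M, p <> q /\ r = `|f p - f q| / d p q].
Let L := lipnorm d f.

Lemma d_pos p q : p <> q -> 0 < d p q.
Proof.
move=> pq; have [d0 [deq _]] := dm; rewrite lt_neqAle d0 andbT.
apply/eqP => /esym /deq; exact: pq.
Qed.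

Lemma d_sym p q : d p q = d q p.
Proof. by have [_ [_ [ds _]]] := dm; apply: ds. Qed.

Lemma Ef_sup : has_sup Ef.
Proof.
have [x xx0] := exx.
split; first by exists (`|f x - f x0| / d x x0); exists x, x0.
have [_ [C hC]] := Lf.
exists C => _ [p [q [pq ->]]].
by rewrite ler_pdivrMr ?d_pos.
Qed.

Lemma quot_le p q : p <> q -> `|f p - f q| / d p q <= L.
Proof. move=> pq; apply: sup_ubound; first exact: (proj2 Ef_sup). by exists p, q. Qed.

Lemma lip_le p q : `|f p - f q| <= L * d p q.
Proof.
have [->|pq] := pselect (p = q).
  rewrite subrr normr0; have [_ [deq _]] := dm; rewrite (proj2 (deq q q) erefl) mulr0 //.
by have := quot_le pq; rewrite ler_pdivrMr ?d_pos.
Qed.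

Lemma L_ge0 : 0 <= L.
Proof.
have [x xx0] := exx; apply: le_trans (quot_le xx0).
by rewrite divr_ge0 // ltW // d_pos.
Qed.

Lemma F2 phi y psi c : free_ball d x0 phi -> Tf_val d x0 f phi y -> blin psi -> 0 <= c ->
  (forall p q, psi (f p - f q) <= c * d p q) -> psi y <= c.
Proof.
move=> fb [s [hs cv]] pb c0 hpq.
have [C [C0 hC]] := blin_lip pb.
apply: close_le => eta e0.
pose c' := c + eta / 2.
have e2 : 0 < eta / 2 by rewrite divr_gt0.
have c'0 : 0 < c' by rewrite /c'; lra.
pose g := fun x => psi (f x) / c'.
have gb : lip_ball d x0 g.
  split; first by rewrite /g (proj1 Lf) (blin0 pb) mul0r.
  move=> p q; rewrite /g -mulrBl -(blinB pb) normrM normfV (gtr0_norm c'0).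
  rewrite ler_pdivrMr //.
  have h1 := hpq p q; have h2 := hpq q p.
  rewrite -opprB (blinN pb) d_sym in h2.
  have : `|psi (f p - f q)| <= c * d p q by rewrite ler_norml; apply/andP; split; lra.
  move=> h; apply: le_trans h _; rewrite mulrC ler_wpM2l //.
    by have [d0 _] := dm; exact: d0.
  rewrite /c'; lra.
have molE n : mol (s n) g = psi (molY f (s n)) / c'.
  rewrite /mol /molY (blin_sum pb) mulr_suml; apply: eq_bigr => x _.
  by rewrite (blinZ pb) /g mulrA.
have fg : `|phi g| <= 1 := fb g gb.
have e4 : 0 < eta / 4 / (C + 1) by rewrite !divr_gt0 //; lra.
have [N1 hN1] : exists N, forall n, (N <= n)%N -> `|y - molY f (s n)| < eta / 4 / (C + 1).
  move/cvgrPdist_lt: cv => /(_ _ e4) [N _ hN]; exists N => n Nn; exact: hN.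
have e5 : 0 < eta / 4 / c' by rewrite !divr_gt0.
have [N2 hN2] := small_inv e5.
pose n := maxn N1 N2.
have h1 := hN1 n (leq_maxl _ _).
have h2 := hN2 n (leq_maxr _ _).
have h3 := hs n g gb.
rewrite molE in h3.
have h4 : psi y <= psi (molY f (s n)) + C * `|y - molY f (s n)|.
  have := hC y (molY f (s n)); rewrite ler_norml => /andP[_ ?]; lra.
have h5 : C * `|y - molY f (s n)| <= (C + 1) * (eta / 4 / (C + 1)).
  by apply: ler_pM => //; [lra | exact: ltW].
have h6 : (C + 1) * (eta / 4 / (C + 1)) = eta / 4 by field; lra.
have h7 : psi (molY f (s n)) / c' <= 1 + n.+1%:R^-1.
  move: h3 fg; set t := n.+1%:R^-1; set a := _ / c'; rewrite !ler_norml => /andP[? ?] /andP[? ?]; lra.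
have h8 : psi (molY f (s n)) <= c' * (1 + n.+1%:R^-1).
  by move: h7; rewrite ler_pdivrMr // mulrC.
have h9 : c' * n.+1%:R^-1 <= eta / 4.
  have : n.+1%:R^-1 <= 2 / n.+1%:R :> R.
    by rewrite ler_pdivlMr ?ltr0Sn // mulVf ?pnatr_eq0 // ler1n.
  move=> h; have := ler_wpM2l (ltW c'0) (le_trans h (ltW h2)).
  have -> // : c' * (eta / 4 / c') = eta / 4 by field; rewrite gt_eqF.
move: h8 h9; set t := n.+1%:R^-1 => h8 h9.
have h10 : psi (molY f (s n)) <= c' + eta / 4.
  rewrite mulrDr mulr1 in h8; move: h8 h9; set u := c' * t; move=> h8 h9; lra.
rewrite h6 in h5; rewrite /c' in h10; lra.
Qed.

Lemma Tf_bound phi y : free_ball d x0 phi -> Tf_val d x0 f phi y -> `|y| <= L.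
Proof.
move=> fb tv; have [ys [ysb ysle ysy]] := norming y.
rewrite -ysy; apply: (F2 fb tv ysb L_ge0) => p q.
exact: le_trans (ysle _) (lip_le p q).
Qed.

Definition mphi p q : (M -> R) -> R := fun g => (g p - g q) / d p q.
Definition mseq p q : seq (R * M) := [:: ((d p q)^-1, p); (- (d p q)^-1, q)].

Lemma mol_mseq p q g : mol (mseq p q) g = mphi p q g.
Proof. by rewrite /mol /mphi big_cons big_cons big_nil /=; ring. Qed.

Lemma molY_mseq p q : molY f (mseq p q) = (d p q)^-1 *: (f p - f q).
Proof. by rewrite /molY big_cons big_cons big_nil /= addr0 scaleNr scalerBr. Qed.

Lemma mphi_free p q : in_free d x0 (mphi p q).
Proof.
split; first by move=> a g h _ _; rewrite /mphi; ring.
move=> e e0; exists (mseq p q) => g _; by rewrite mol_mseq subrr normr0 ltW.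
Qed.

Lemma mphi_ball p q : p <> q -> free_ball d x0 (mphi p q).
Proof.
move=> pq g [_ hg]; rewrite /mphi normrM normfV (gtr0_norm (d_pos pq)).
by rewrite ler_pdivrMr ?d_pos // mul1r.
Qed.

Lemma mphi_val p q : Tf_val d x0 f (mphi p q) ((d p q)^-1 *: (f p - f q)).
Proof.
exists (fun _ => mseq p q); split.
  by move=> n g _; rewrite mol_mseq subrr normr0 invr_ge0.
rewrite molY_mseq; exact: cvg_cst.
Qed.

Lemma Tf_norm_eq : Tf_norm d x0 f = L.
Proof.
rewrite /Tf_norm; set T := (X in sup X).
have [x xx0] := exx.
have Tne : T !=set0.
  exists `|(d x x0)^-1 *: (f x - f x0)|.
  exists (mphi x x0), ((d x x0)^-1 *: (f x - f x0)); split; first exact: mphi_free.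
  by split; [exact: mphi_ball | split; [exact: mphi_val|]].
have Tub : ubound T L.
  by move=> _ [phi [y [_ [fb [tv ->]]]]]; exact: Tf_bound fb tv.
apply/eqP; rewrite eq_le; apply/andP; split; first exact: ge_sup.
apply: ge_sup; first by case: Ef_sup.
move=> _ [p [q [pq ->]]]; apply: sup_ubound; first by exists L.
exists (mphi p q), ((d p q)^-1 *: (f p - f q)); split; first exact: mphi_free.
split; first exact: mphi_ball.
split; first exact: mphi_val.
by rewrite normrZ normfV (gtr0_norm (d_pos pq)) mulrC.
Qed.

End Main.
Unset Implicit Arguments.
Local Close Scope classical_set_scope.
Local Open Scope ring_scope.

Theorem corollary2p5 (R : realType) (M : Type) (d : M -> M -> R) (x0 : M)
    (Y : completeNormedModType R) :
  is_metric d -> complete_metric d ->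
  (exists x : M, x <> x0) ->
  strictly_convex Y -> kadec_klee Y ->
  forall f : M -> Y, Lip0 d x0 f ->
    (in_A d f <-> Tf_QNA d x0 f).
Proof.
move=> dm _ exx SC KK f Lf.
have TL := Tf_norm_eq dm exx Lf.
split.
  move=> [y [p [q [pq [cv ny]]]]].
  exists (fun n => mphi d (p n) (q n)),
    (fun n => (d (p n) (q n))^-1 *: (f (p n) - f (q n))), y.
  split; last by split => //; rewrite TL.
  move=> n; split; first exact: mphi_free.
  split; first exact: (mphi_ball (x0 := x0) dm (pq n)).
  exact: mphi_val.
move=> [phi [yn [y0 [hn [cv ny0]]]]].
rewrite TL in ny0.
have L0 := L_ge0 dm exx Lf.
have lle := lip_le dm exx Lf.
set L := lipnorm d f in ny0 L0 lle *.
have [x xx0] := exx.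
have [Le|Lpos] := eqVneq L 0.
  have y00 : y0 = 0 by apply/normr0_eq0; rewrite ny0 Le.
  exists y0, (fun _ => x), (fun _ => x0); split => //; split; last by rewrite ny0.
  have fe : f x - f x0 = 0.
    by apply/normr0_eq0/eqP; rewrite eq_le normr_ge0 andbT; have := lle x x0; rewrite Le mul0r.
  rewrite fe scaler0 y00; exact: cvg_cst.
have Lp : 0 < L by rewrite lt_neqAle eq_sym Lpos L0.
pose S : set Y := fun s => exists p q, p <> q /\ s = (L * d p q)^-1 *: (f p - f q).
pose yh := L^-1 *: y0.
have nyh : `|yh| = 1 by rewrite /yh normrZ normfV (gtr0_norm Lp) ny0 mulVf ?gt_eqF.
have Sb : forall s, S s -> `|s| <= 1.
  move=> _ [p [q [pq ->]]].
  have dp := d_pos dm pq.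
  rewrite normrZ normfV gtr0_norm ?mulr_gt0 // mulrC ler_pdivrMr ?mulr_gt0 // mul1r.
  exact: lle.
have sep : forall psi, blin psi -> (forall s, S s -> psi s <= 1) -> psi yh <= 1.
  move=> psi pb hS.
  have hpq : forall p q, psi (f p - f q) <= L * d p q.
    move=> p q; have [->|pq] := pselect (p = q).
      rewrite subrr (blin0 pb); have [d0 _] := dm; exact: mulr_ge0 (ltW Lp) (d0 q q).
    have dp := d_pos dm pq.
    have := hS _ (ex_intro _ p (ex_intro _ q (conj pq erefl))).
    by rewrite (blinZ pb) mulrC ler_pdivrMr ?mulr_gt0 // mul1r.
  have hyn n : psi (yn n) <= L.
    have [_ [fb tv]] := hn n.
    exact: (@F2 R M d x0 Y dm f Lf _ _ psi L fb tv pb L0 hpq).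
  have [C [C0 hC]] := blin_lip pb.
  have py0 : psi y0 <= L.
    apply: close_le => eta e0.
    have e' : 0 < eta / (C + 1) by rewrite divr_gt0 //; lra.
    move/cvgrPdist_lt: cv => /(_ _ e') [N _ hN].
    have h1 := hN N (leqnn N).
    have h2 := hC y0 (yn N).
    have h3 : C * `|y0 - yn N| <= (C + 1) * (eta / (C + 1)).
      by apply: ler_pM => //; [lra | exact: ltW].
    have h4 : (C + 1) * (eta / (C + 1)) = eta by field; lra.
    have h5 := hyn N.
    move: h2; rewrite ler_norml => /andP[_ h2]; lra.
  rewrite /yh (blinZ pb) mulrC ler_pdivrMr // mul1r; exact: py0.
have hG : forall n : nat, exists pq : M * M, pq.1 <> pq.2 /\
    `|(L * d pq.1 pq.2)^-1 *: (f pq.1 - f pq.2) - yh| < n.+1%:R^-1.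
  move=> n; have ni : 0 < n.+1%:R^-1 :> R by rewrite invr_gt0 ltr0Sn.
  have [s [[p [q [pq ->]]] hs]] := core SC KK Sb nyh sep ni.
  by exists (p, q).
have [G hG'] := choice hG.
exists y0, (fun n => (G n).1), (fun n => (G n).2); split; first by move=> n; exact: (hG' n).1.
split; last by rewrite ny0.
apply/cvgrPdist_lt => e e0.
have eL : 0 < e / L by rewrite divr_gt0.
have [N hN] := small_inv eL.
exists N => // n /= Nn.
have [pq hn'] := hG' n.
set p := (G n).1 in pq hn' *; set q := (G n).2 in pq hn' *.
have dp := d_pos dm pq.
have e1 : y0 - (d p q)^-1 *: (f p - f q) = - (L *: ((L * d p q)^-1 *: (f p - f q) - yh)).
  have k1 : L * (L * d p q)^-1 = (d p q)^-1.
    by field; apply/andP; split; rewrite gt_eqF.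
  by rewrite /yh [in RHS]scalerBr !scalerA k1 mulfV ?gt_eqF // scale1r opprB.
rewrite e1 normrN normrZ (gtr0_norm Lp).
have h1 : n.+1%:R^-1 <= 2 / n.+1%:R :> R.
  by rewrite ler_pdivlMr ?ltr0Sn // mulVf ?pnatr_eq0 // ler1n.
have h2 := hN n Nn.
have h3 : `|(L * d p q)^-1 *: (f p - f q) - yh| < e / L.
  exact: lt_le_trans hn' (le_trans h1 (ltW h2)).
by rewrite mulrC -ltr_pdivlMr.
Qed.
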